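(* Let $n\ge 2$ and let $q\ne 2$ be a prime power. Let $\xi$ be a generator of the multiplicative group ${\rm GF}(q)^\times$. Then ${\rm GL}(n,q)$ is generated by the two matrices $h_1(\xi)=\mathrm{diag}(\xi,1,\dots,1)$ and $x_{12}(1)\,w$, where $x_{12}(1)=I+E_{12}$ and $w$ is the $n\times n$ matrix with entry $1$ in position $(1,n)$, entry $-1$ in positions $(i+1,i)$ for $1\le i\le n-1$, and $0$ elsewhere. Explicitly, $x_{12}(1)w$ has first row $(-1,0,\dots,0,1)$, second row $(-1,0,\dots,0)$, and for $3\le i\le n$ its $i$-th row has $-1$ in column $i-1$ and zeros elsewhere. (For $n=2$ the generators are $\begin{pmatrix}\xi&0\\0&1\end{pmatrix}$ and $\begin{pmatrix}-1&1\\-1&0\end{pmatrix}$.)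
   Context: $E_{ij}$ denotes the square matrix with $1$ in position $(i,j)$ and $0$ elsewhere. For $\alpha\in{\rm GF}(q)$ and $i\ne j$, $x_{ij}(\alpha)=I+\alpha E_{ij}$; $h_i(\alpha)$ is the diagonal matrix obtained from the identity by replacing the $i$-th diagonal entry by $\alpha$. The matrix $w$ equals $w_1w_2\cdots w_{n-1}$, where $w_i$ is the permutation matrix of the transposition $(i,i+1)$ with its $(i+1,i)$ entry replaced by $-1$. *)

(* Defs.v *)
From HB Require Import structures.
From mathcomp Require Import all_boot all_order all_algebra all_fingroup all_field.
Set Implicit Arguments. Unset Strict Implicit. Unset Printing Implicit Defensive.
Import GRing.Theory.
Local Open Scope ring_scope.

(* Matrices of size k.+1 (the paper's n is k.+1); indices are 0-based here:
   the paper's index i corresponds to the ordinal with value i-1. *)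
Section Gens.
Variable F : fieldType.
Variable k : nat.

Definition Emx (i j : 'I_k.+1) : 'M[F]_k.+1 := delta_mx i j.
Definition xmx (i j : 'I_k.+1) (a : F) : 'M[F]_k.+1 := 1%:M + a *: Emx i j.
Definition hmx (i : 'I_k.+1) (a : F) : 'M[F]_k.+1 :=
  \matrix_(r, c) (if r == c then (if r == i then a else 1) else 0).
(* w_i (0-based i < k): permutation matrix of the transposition (i, i+1)
   with its (i+1, i) entry replaced by -1 *)
Definition wimx (i : nat) : 'M[F]_k.+1 :=
  \matrix_(r, c)
    (if (r == i :> nat) && (c == i.+1 :> nat) then 1
     else if (r == i.+1 :> nat) && (c == i :> nat) then -1
     else if (r == c) && (r != i :> nat) && (r != i.+1 :> nat) then 1
     else 0).
Definition wmx : 'M[F]_k.+1 := \prod_(i < k) wimx i.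
End Gens.

(* Main.v *)
Require Import Defs.
From HB Require Import structures.
From mathcomp Require Import all_boot all_order all_algebra all_fingroup all_field.
From mathcomp Require Import zify ring.
Set Implicit Arguments. Unset Strict Implicit. Unset Printing Implicit Defensive.
Import GRing.Theory.
Local Open Scope ring_scope.

Section Work.
Variable F : finFieldType.
Variable k : nat.
Notation M := 'M[F]_k.+1.
Notation E := (@delta_mx F k.+1 k.+1).

Lemma sum_dl (f : 'I_k.+1 -> F) a : \sum_t (t == a)%:R * f t = f a.
Proof.
rewrite (bigD1 a) //= eqxx mul1r big1 ?addr0 // => t /negbTE ->; by rewrite mul0r.
Qed.
Lemma sum_dr (f : 'I_k.+1 -> F) a : \sum_t f t * (t == a)%:R = f a.
Proof.
rewrite (bigD1 a) //= eqxx mulr1 big1 ?addr0 // => t /negbTE ->; by rewrite mulr0.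
Qed.

Lemma xmxE i j a : xmx i j a = 1 + a *: E i j.
Proof. by rewrite /xmx /Emx. Qed.

Lemma hmxE i a : hmx i a = 1 + (a - 1) *: E i i.
Proof.
apply/matrixP => r c; rewrite !mxE.
case: (eqVneq r c) => [<-|rc] /=.
  by case: (eqVneq r i) => ri /=; rewrite ?mulr1 ?mulr0 ?addr0 //; ring.
case: (eqVneq r i) => [ri|ri] /=; last by rewrite mulr0 addr0.
by subst r; rewrite eq_sym (negbTE rc) mulr0 addr0.
Qed.

Definition Pm (i0 i1 : 'I_k.+1) (a b c : F) : M :=
  1 + a *: E i0 i0 + b *: E i0 i1 + c *: E i1 i1.

Lemma PmM i0 i1 a b c a' b' c' : i0 != i1 ->
  Pm i0 i1 a b c *m Pm i0 i1 a' b' c' =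
  Pm i0 i1 (a + a' + a * a') (b + b' + a * b' + b * c') (c + c' + c * c').
Proof.
move=> ne; have ne' : i1 != i0 by rewrite eq_sym.
rewrite /Pm !mulmxDl !mulmxDr !mul1mx !mulmx1 -!scalemxAl -!scalemxAr !scalerA.
rewrite !mul_delta_mx_cond !eqxx (negbTE ne) (negbTE ne') !mulr0n !mulr1n !scaler0 !addr0.
rewrite !scalerDl.
by apply/matrixP => r s; rewrite !mxE; ring.
Qed.

Definition sig (c : 'I_k.+1) : 'I_k.+1 := inZp c.+1.
Definition sg (c : 'I_k.+1) : F := if (c == k :> nat) then 1 else -1.
Definition ev (t : 'I_k.+1) : 'cV[F]_k.+1 := delta_mx t 0.

Lemma col_mulmx (A B : M) c : col c (A *m B) = A *m col c B.
Proof. by rewrite !colE mulmxA. Qed.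
Lemma mul_ev (A : M) t : A *m ev t = col t A.
Proof. by rewrite colE. Qed.

Lemma col_wimx m c : (m < k)%N -> col c (wimx F k m) =
  if (c == m.+1 :> nat) then ev (inZp m) else if (c == m :> nat) then - ev (inZp m.+1) else ev c.
Proof.
move=> hm.
have e1 : (m %% k.+1 = m)%N by rewrite modn_small //; lia.
have e2 : (m.+1 %% k.+1 = m.+1)%N by rewrite modn_small //; lia.
rewrite /ev; case: ifP => cm; [|case: ifP => cm'];
 apply/matrixP => r z; rewrite !ord1 !mxE /= -?(inj_eq val_inj) /= ?e1 ?e2;
 move: cm; rewrite ?cm' => cm;
 repeat (case: eqP => ? /=); (try by []); (try lia); by rewrite ?oppr0.
Qed.

Lemma col_prodw m c : (m <= k)%N -> col c (\prod_(i < m) wimx F k i) =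
  if (c < m)%N then - ev (inZp c.+1) else if (c == m :> nat) then ev 0 else ev c.
Proof.
elim: m c => [|m IH] c hm.
  rewrite big_ord0 ltn0; case: ifP => [/eqP c0|_].
    have -> : c = 0 by apply: val_inj.
    by rewrite /ev; apply/matrixP => r z; rewrite !mxE ord1 eqxx andbT.
  by rewrite /ev; apply/matrixP => r z; rewrite !mxE ord1 eqxx andbT.
rewrite (big_ord_recr m) /= -mulmxE col_mulmx col_wimx //.
have e1 : (m %% k.+1 = m)%N by rewrite modn_small //; lia.
have e2 : (m.+1 %% k.+1 = m.+1)%N by rewrite modn_small //; lia.
case: ifP => [/eqP cm|cm].
  rewrite mul_ev IH /= ?e1 ?ltnn ?eqxx; last lia.
  by rewrite cm ltnn.
case: (eqVneq (c : nat) m) => [cm'|cm'].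
  rewrite mulmxN mul_ev IH /= ?e2; last lia.
  have -> : (m.+1 < m)%N = false by lia.
  have -> : (m.+1 == m) = false by lia.
  have -> : (c < m.+1)%N by lia.
  by rewrite cm'.
rewrite mul_ev IH; last lia.
have -> : (c < m.+1)%N = (c < m)%N by lia.
by rewrite (negbTE cm').
Qed.

Lemma colW c : col c (wmx F k) = sg c *: ev (sig c).
Proof.
rewrite /wmx col_prodw // /sg /sig.
case: ifP => [ck|ck].
  have -> : (c == k :> nat) = false by lia.
  by rewrite scaleN1r.
have ck' : (c : nat) = k by have := ltn_ord c; lia.
have -> : (c == k :> nat) = true by apply/eqP.
rewrite scale1r; congr ev; apply: val_inj => /=.
by rewrite ck' modnn.
Qed.

Notation W := (wmx F k).
Lemma sg2 c : sg c * sg c = 1.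
Proof. by rewrite /sg; case: ifP; rewrite ?mulr1 ?mulrNN ?mulr1. Qed.

Lemma sig_inj : injective sig.
Proof.
move=> a b /(congr1 val) /= h; apply: val_inj => /=.
by move/eqP: h; rewrite -(addn1 a) -(addn1 b) eqn_modDr !modn_small // => /eqP.
Qed.

Lemma WE r c : W r c = sg c * (r == sig c)%:R.
Proof.
have := congr1 (fun m : 'cV[F]_k.+1 => m r 0) (colW c); rewrite !mxE => ->; by rewrite eqxx andbT.
Qed.

Lemma W_delta i j : W *m E i j = sg i *: E (sig i) j.
Proof.
rewrite -(mul_delta_mx (0 : 'I_1)) mulmxA -/(ev i) mul_ev colW -scalemxAl.
by rewrite mul_delta_mx.
Qed.

Lemma delta_W i j : E i (sig j) *m W = sg j *: E i j.
Proof.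
rewrite -(mul_delta_mx (0 : 'I_1)) -mulmxA -rowE.
have -> : row (sig j) W = sg j *: delta_mx 0 j.
  apply/matrixP => z c; rewrite !mxE WE (inj_eq sig_inj) ord1 eqxx /= eq_sym.
  by case: eqVneq => [->|] //=; rewrite ?mulr0 ?mulr1.
by rewrite -scalemxAr mul_delta_mx.
Qed.

Lemma W_unit : W \in unitmx.
Proof.
suff : W^T *m W = 1 by case/mulmx1_unit.
apply/matrixP => r c; rewrite !mxE.
rewrite (eq_bigr (fun t => (t == sig r)%:R * (sg r * sg c * (t == sig c)%:R))); last first.
  by move=> t _; rewrite !mxE !WE; ring.
rewrite sum_dl (inj_eq sig_inj).
case: eqVneq => [->|] /=; by rewrite ?sg2 ?mulr1 ?mulr0.
Qed.

Lemma W_xmx i j a : W *m xmx i j a = xmx (sig i) (sig j) (sg i * sg j * a) *m W.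
Proof.
rewrite !xmxE mulmxDr mulmxDl mulmx1 mul1mx -scalemxAr -scalemxAl W_delta delta_W.
by rewrite !scalerA; congr (_ + _ *: _); rewrite -[LHS]mulr1 -(sg2 j); ring.
Qed.

Lemma W_hmx i a : W *m hmx i a = hmx (sig i) a *m W.
Proof.
rewrite !hmxE mulmxDr mulmxDl mulmx1 mul1mx -scalemxAr -scalemxAl W_delta delta_W.
by rewrite !scalerA mulrC.
Qed.

Lemma hmxM (i : 'I_k.+1) (a b : F) : hmx i a *m hmx i b = hmx i (a * b).
Proof.
rewrite !hmxE mulmxDl !mulmxDr !mul1mx mulmx1 -!scalemxAl -scalemxAr mul_delta_mx scalerA.
by apply/matrixP => r c; rewrite !mxE; ring.
Qed.
Lemma hmx1 (i : 'I_k.+1) : hmx i (1 : F) = 1.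
Proof. by rewrite hmxE subrr scale0r addr0. Qed.
Lemma xmx0 (i j : 'I_k.+1) : xmx i j (0 : F) = 1.
Proof. by rewrite xmxE scale0r addr0. Qed.
Lemma xmxM (i j : 'I_k.+1) (a b : F) : i != j -> xmx i j a *m xmx i j b = xmx i j (a + b).
Proof.
move=> ij; rewrite !xmxE mulmxDl !mulmxDr !mul1mx mulmx1 -!scalemxAl -scalemxAr.
rewrite mul_delta_mx_cond eq_sym (negbTE ij) mulr0n.
by apply/matrixP => r c; rewrite !mxE; ring.
Qed.
Lemma hmx_unit (i : 'I_k.+1) (a : F) : a != 0 -> hmx i a \in unitmx.
Proof. by move=> a0; have := hmxM i a a^-1; rewrite mulfV // hmx1 => /mulmx1_unit []. Qed.
Lemma xmx_unit (i j : 'I_k.+1) (a : F) : i != j -> xmx i j a \in unitmx.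
Proof. by move=> ij; have := xmxM a (-a) ij; rewrite subrr xmx0 => /mulmx1_unit []. Qed.

Lemma xmx_comm (i j l : 'I_k.+1) (a b : F) : i != j -> j != l -> i != l ->
  xmx i j a *m xmx j l b = xmx i l (a * b) *m xmx j l b *m xmx i j a.
Proof.
move=> ij jl il.
have ji : j != i by rewrite eq_sym.
have lj : l != j by rewrite eq_sym.
have li : l != i by rewrite eq_sym.
rewrite !xmxE.
do ![rewrite mulmxDl | rewrite mulmxDr | rewrite mul1mx | rewrite mulmx1 | rewrite mul0mx
    | rewrite mulmx0 | rewrite -scalemxAl | rewrite -scalemxAr | rewrite mul_delta_mx_cond
    | rewrite eqxx | rewrite (negbTE ij) | rewrite (negbTE jl) | rewrite (negbTE il)
    | rewrite (negbTE ji) | rewrite (negbTE lj) | rewrite (negbTE li) | rewrite mulr0n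
    | rewrite mulr1n | rewrite scaler0].
by apply/matrixP => r c; rewrite !mxE; ring.
Qed.

Lemma hmxP (i0 i1 : 'I_k.+1) (a : F) : hmx i0 a = Pm i0 i1 (a - 1) 0 0.
Proof. by rewrite hmxE /Pm !scale0r !addr0. Qed.
Lemma hmxP' (i0 i1 : 'I_k.+1) (a : F) : hmx i1 a = Pm i0 i1 0 0 (a - 1).
Proof. by rewrite hmxE /Pm !scale0r !addr0. Qed.
Lemma xmxP (i0 i1 : 'I_k.+1) (a : F) : xmx i0 i1 a = Pm i0 i1 0 a 0.
Proof. by rewrite xmxE /Pm !scale0r !addr0. Qed.

Notation G := {'GL_k.+1[F]}.
Definition gl (A : M) : G := insubd (1%g : G) A.
Lemma glK A : A \in unitmx -> GLval (gl A) = A.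
Proof. by move=> hA; rewrite /gl insubdK. Qed.

Section HMs.
Variable Hs : {group G}.
Definition HM (A : M) := exists2 g, g \in Hs & GLval g = A.

Lemma HM1 : HM 1.
Proof. by exists 1%g; rewrite ?group1. Qed.
Lemma HMM A B : HM A -> HM B -> HM (A *m B).
Proof. by case=> g hg <- [h hh <-]; exists (g * h)%g; rewrite ?groupM. Qed.
Lemma HMV A : HM A -> HM (invmx A).
Proof. by case=> g hg <-; exists (g^-1)%g; rewrite ?groupV. Qed.
Lemma HM_unit A : HM A -> A \in unitmx.
Proof. by case=> g _ <-; have := @GL_unitmx k.+1 F g. Qed.
Lemma HM_cancel s A : HM s -> HM (s *m A) -> HM A.
Proof.
move=> hs hsA; have := HMM (HMV hs) hsA; by rewrite mulmxA mulVmx ?mul1mx // HM_unit.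
Qed.

Lemma entryD (X Y : M) r c : (X + Y) r c = X r c + Y r c.
Proof. by rewrite mxE. Qed.
Lemma entryZ a (X : M) r c : (a *: X) r c = a * X r c.
Proof. by rewrite mxE. Qed.

Lemma dE i p (A : M) r c : (E i p *m A) r c = (r == i)%:R * A p c.
Proof.
rewrite !mxE -[A p c](sum_dl (fun t => A t c)) mulr_sumr.
by apply: eq_bigr => t _; rewrite !mxE; case: (r == i); rewrite /= ?mul1r ?mul0r.
Qed.

Lemma xE i p a (A : M) r c : (xmx i p a *m A) r c = A r c + a * ((r == i)%:R * A p c).
Proof. by rewrite xmxE mulmxDl mul1mx -scalemxAl entryD entryZ dE. Qed.

Lemma hE i a (A : M) r c : (hmx i a *m A) r c = A r c + (a - 1) * ((r == i)%:R * A i c).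
Proof. by rewrite hmxE mulmxDl mul1mx -scalemxAl entryD entryZ dE. Qed.

Definition fixd (j : nat) (A : M) := forall r c : 'I_k.+1, (j <= c)%N -> A r c = (r == c)%:R.

Lemma fixdM j (s A : M) (r c : 'I_k.+1) : fixd j A -> (j <= c)%N -> (s *m A) r c = s r c.
Proof.
move=> fA jc; rewrite !mxE -(sum_dr (s r)); apply: eq_bigr => t _; by rewrite fA.
Qed.

Lemma colclear j (f : 'I_k.+1 -> F) :
  (forall i a, i != j -> HM (xmx i j a)) ->
  HM (1 + \sum_(i | i != j) f i *: E i j).
Proof.
move=> hx.
suff : HM (1 + \sum_(i | i != j) f i *: E i j) /\ E j j *m (\sum_(i | i != j) f i *: E i j) = 0 by case.
apply: (big_rec (fun x => HM (1 + x) /\ E j j *m x = 0)).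
  by rewrite addr0 mulmx0; split=> //; exact: HM1.
move=> i x ij [hx1 hx2]; split.
  have -> : 1 + (f i *: E i j + x) = xmx i j (f i) *m (1 + x).
    have Ex : E i j *m x = 0 by rewrite -[E i j](mul_delta_mx j) -mulmxA hx2 mulmx0.
    rewrite xmxE mulmxDl mul1mx mulmxDr mulmx1 -scalemxAl Ex scaler0 addr0.
    by rewrite [f i *: _ + x]addrC addrA.
  apply: HMM => //; exact: hx.
rewrite mulmxDr hx2 addr0 -scalemxAr mul_delta_mx_cond.
by rewrite eq_sym (negbTE ij) mulr0n scaler0.
Qed.

Lemma pivot (jo : 'I_k.+1) (A : M) : A \in unitmx -> fixd jo.+1 A ->
  exists p : 'I_k.+1, ((p <= jo)%N && (A p jo != 0)).
Proof.
move=> uA fA.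
case: (pickP (fun p : 'I_k.+1 => (p <= jo)%N && (A p jo != 0))) => [p hp|none]; first by exists p.
have z : forall p : 'I_k.+1, (p <= jo)%N -> A p jo = 0.
  by move=> p hp; have := none p; rewrite hp /= => /negbFE /eqP.
pose u : 'cV[F]_k.+1 := \col_t ((t == jo)%:R - A t jo).
have Au : A *m u = 0.
  apply/matrixP => r z0; rewrite !mxE.
  rewrite (eq_bigr (fun t => A r t * (t == jo)%:R - (t == r)%:R * A t jo)); last first.
    move=> t _; rewrite !mxE mulrBr; congr (_ - _).
    case: (leqP t jo) => ht; first by rewrite z // !mulr0.
    by rewrite (fA r t) // eq_sym.
  rewrite big_split /= sumrN sum_dr sum_dl subrr //.
have : u = 0 by rewrite -(mulKmx uA u) Au mulmx0.
move/matrixP => /(_ jo 0); rewrite !mxE eqxx z // subr0 => /eqP; by rewrite oner_eq0.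
Qed.

Lemma xmx_rc (i p r c : 'I_k.+1) (a : F) : xmx i p a r c = (r == c)%:R + a * ((r == i) && (c == p))%:R.
Proof. by rewrite xmxE !mxE. Qed.

Lemma gen_all : (forall i j a, i != j -> HM (xmx i j a)) ->
  (forall a, a != 0 -> HM (hmx 0 a)) -> forall A, A \in unitmx -> HM A.
Proof.
move=> hx hh.
suff H : forall j, (j <= k.+1)%N -> forall A, A \in unitmx -> fixd j A -> HM A.
  move=> A uA; apply: (H k.+1) => // r c hc; have := ltn_ord c; lia.
elim=> [|j IH] hj A uA fA.
  have -> : A = 1 by apply/matrixP => r c; rewrite fA // mxE.
  exact: HM1.
pose jo : 'I_k.+1 := Ordinal hj.
have stepC : forall B, B \in unitmx -> fixd j.+1 B -> B jo jo = 1 -> HM B.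
  move=> B uB fB b1.
  have hT := colclear (fun i => - B i jo) (fun i a h => hx i jo a h).
  apply: (HM_cancel hT); apply: IH; first lia.
    by rewrite unitmx_mul (HM_unit hT) uB.
  move=> r c hc; case: (eqVneq c jo) => [->|cne].
    rewrite mulmxDl mul1mx mulmx_suml entryD summxE.
    under eq_bigr do rewrite -scalemxAl entryZ dE b1 mulr1.
    rewrite big_mkcond /=.
    rewrite (eq_bigr (fun i => (i == r)%:R * (if i != jo then - B i jo else 0))); last first.
      by move=> i _; rewrite [r == i]eq_sym; case: (i != jo); case: (i == r); rewrite ?mulr0 ?mul0r ?mul1r ?mulr1.
    rewrite sum_dl; case: (eqVneq r jo) => [->|rj] /=; first by rewrite addr0 b1.
    by rewrite subrr.
  have hc' : (j.+1 <= c)%N by move: cne; rewrite -(inj_eq val_inj) /= => /eqP; lia.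
  rewrite (fixdM _ _ fB) // !mxE summxE big1 ?addr0 // => i _.
  by rewrite !mxE (negbTE cne) andbF mulr0.
have stepB : forall B, B \in unitmx -> fixd j.+1 B -> B 0 jo != 0 -> HM B.
  move=> B uB fB b0.
  case: (posnP j) => [j0|jp].
    have jo0 : jo = 0 by apply: val_inj.
    rewrite jo0 in b0.
    have hs := hh _ (invr_neq0 b0).
    apply: (HM_cancel hs); apply: stepC.
    - by rewrite unitmx_mul (HM_unit hs) uB.
    - move=> r c hc; rewrite (fixdM _ _ fB) // !mxE.
      case: (eqVneq r c) => [->|] //=.
      by have -> : (c == 0) = false by apply/negbTE; rewrite -(inj_eq val_inj) /=; lia.
    - rewrite jo0 hE eqxx mul1r; field; exact: b0.
  have jn0 : jo != 0 by rewrite -(inj_eq val_inj) /=; lia.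
  have hs := hx _ _ ((1 - B jo jo) / B 0 jo) jn0.
  apply: (HM_cancel hs); apply: stepC.
  - by rewrite unitmx_mul (HM_unit hs) uB.
  - move=> r c hc; rewrite (fixdM _ _ fB) // xmx_rc.
    have -> : (c == 0) = false by apply/negbTE; rewrite -(inj_eq val_inj) /=; lia.
    by rewrite andbF mulr0 addr0.
  - by rewrite xE eqxx mul1r mulfVK // addrC subrK.
case: (eqVneq (A 0 jo) 0) => [a0|a0]; last exact: stepB.
have [p /andP[pj ap]] := @pivot jo A uA fA.
have p0 : (0 : 'I_k.+1) != p by apply/eqP => ep; rewrite -ep a0 eqxx in ap.
have hs := hx _ _ 1 p0.
apply: (HM_cancel hs); apply: stepB.
- by rewrite unitmx_mul (HM_unit hs) uA.
- move=> r c hc; rewrite (fixdM _ _ fA) // xmx_rc.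
  have -> : (c == p) = false by apply/negbTE; rewrite -(inj_eq val_inj) /=; have pj' : (p <= j)%N := pj; lia.
  by rewrite andbF mulr0 addr0.
- by rewrite xE eqxx mul1r a0 add0r mul1r.
Qed.
End HMs.

Section Main.
Hypothesis hk : (0 < k)%N.
Variable xi : {unit F}.
Hypothesis hxi : <[xi]>%g = [set: {unit F}].
Hypothesis hq : #|F| != 2%N.

Let x : F := val xi.
Let i1 : 'I_k.+1 := sig 0.
Lemma n01 : (0 : 'I_k.+1) != i1.
Proof. by rewrite -(inj_eq val_inj) /= modn_small //; lia. Qed.

Lemma x0 : x != 0.
Proof. by have := valP xi; rewrite unitfE. Qed.

Lemma x1 : x != 1.
Proof.
apply/eqP => ex.
have xi1 : xi = 1%g by apply: val_inj.
have := card_finField_unit F; rewrite -hxi xi1 cycle1 cards1 => /esym h.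
by move: hq; have := h; case: #|F| => [|[|[|n]]] //.
Qed.

Definition g1 : G := gl (hmx 0 x).
Definition g2 : G := gl (xmx 0 i1 1 *m W).
Definition Hs : {group G} := (<<[set g1; g2]>>)%G.

Lemma g2_unit : xmx 0 i1 1 *m W \in unitmx.
Proof. by rewrite unitmx_mul xmx_unit ?n01 // W_unit. Qed.

Lemma HMg1 : HM Hs (hmx 0 x).
Proof. exists g1; first by rewrite mem_gen // !inE eqxx. by rewrite glK // hmx_unit // x0. Qed.
Lemma HMg2 : HM Hs (xmx 0 i1 1 *m W).
Proof. exists g2; first by rewrite mem_gen // !inE eqxx orbT. by rewrite glK // g2_unit. Qed.

Lemma HMh a : a != 0 -> HM Hs (hmx 0 a).
Proof.
move=> a0.
pose u : {unit F} := insubd (1%g : {unit F}) a.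
have ua : val u = a by rewrite /u insubdK // unitfE.
have : u \in <[xi]>%g by rewrite hxi inE.
case/cycleP => m um; rewrite -ua um FinRing.val_unitX -/x.
elim: m {um} => [|m IH]; first by rewrite expr0 hmx1; exact: HM1.
by rewrite exprS -hmxM; apply: HMM => //; exact: HMg1.
Qed.

Let uu : M := xmx 0 i1 1 *m hmx i1 x *m xmx 0 i1 (-1).

Lemma HMu : HM Hs uu.
Proof.
set g := xmx 0 i1 1 *m W.
have e : g *m hmx 0 x = uu *m g.
  rewrite /g /uu -mulmxA W_hmx -/i1 mulmxA.
  by rewrite -[uu *m _ ]mulmxA -!mulmxA (mulmxA (xmx 0 i1 (-1))) xmxM ?n01 // addNr xmx0 mul1mx.
have -> : uu = g *m hmx 0 x *m invmx g by rewrite e mulmxK // g2_unit.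
by apply: HMM; [apply: HMM; [exact: HMg2 | exact: HMg1] | apply: HMV; exact: HMg2].
Qed.

Let c : F := (x - 1) ^+ 2.

Lemma HMc : HM Hs (xmx 0 i1 c).
Proof.
have uu_u : uu \in unitmx by apply: HM_unit HMu.
have e : uu *m xmx 0 i1 c = hmx 0 x *m uu *m hmx 0 x^-1.
  rewrite /uu (hmxP' 0) !(xmxP 0 i1) !(hmxP 0 i1) !PmM ?n01 //.
  by congr Pm; rewrite /c; field; rewrite ?x0.
have -> : xmx 0 i1 c = invmx uu *m (hmx 0 x *m uu *m hmx 0 x^-1) by rewrite -e mulKmx.
apply: HMM; first exact: HMV HMu.
apply: HMM; last by apply: HMh; rewrite invr_eq0 x0.
apply: HMM; [exact: HMg1 | exact: HMu].
Qed.

Lemma c0 : c != 0.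
Proof. by rewrite /c expf_neq0 // subr_eq0 x1. Qed.

Lemma HMX a : HM Hs (xmx 0 i1 a).
Proof.
case: (eqVneq a 0) => [->|a0]; first by rewrite xmx0; exact: HM1.
have d0 : a / c != 0 by rewrite mulf_neq0 // invr_eq0 c0.
have -> : xmx 0 i1 a = hmx 0 (a / c) *m xmx 0 i1 c *m hmx 0 (a / c)^-1.
  rewrite !(xmxP 0 i1) !(hmxP 0 i1) !PmM ?n01 //.
  by congr Pm; field; rewrite ?c0 ?a0.
apply: HMM; last by apply: HMh; rewrite invr_eq0.
apply: HMM; [exact: HMh | exact: HMc].
Qed.

Lemma HMW : HM Hs W.
Proof.
have -> : W = xmx 0 i1 (-1) *m (xmx 0 i1 1 *m W) by rewrite mulmxA xmxM ?n01 // addNr xmx0 mul1mx.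
apply: HMM; [exact: HMX | exact: HMg2].
Qed.

Lemma HMshift (i j : 'I_k.+1) : (forall a, HM Hs (xmx i j a)) -> forall a, HM Hs (xmx (sig i) (sig j) a).
Proof.
move=> hij a.
have -> : xmx (sig i) (sig j) a = W *m xmx i j (sg i * sg j * a) *m invmx W.
  rewrite W_xmx mulmxK ?W_unit //; congr xmx.
  by rewrite !mulrA -(mulrA (sg i)) [sg j * sg i]mulrC !mulrA sg2 mul1r sg2 mul1r.
apply: HMM; last by apply: HMV; exact: HMW.
apply: HMM; [exact: HMW | exact: hij].
Qed.

Lemma HMcomm (i j l : 'I_k.+1) : i != j -> j != l -> i != l ->
  (forall a, HM Hs (xmx i j a)) -> (forall a, HM Hs (xmx j l a)) -> forall a, HM Hs (xmx i l a).
Proof.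
move=> ij jl il hij hjl a.
have u : xmx j l 1 *m xmx i j a \in unitmx by rewrite unitmx_mul !xmx_unit.
have -> : xmx i l a = (xmx i j a *m xmx j l 1) *m invmx (xmx j l 1 *m xmx i j a).
  by rewrite xmx_comm // mulr1 -(mulmxA (xmx i l a)) mulmxK.
apply: HMM; first by apply: HMM.
by apply: HMV; apply: HMM.
Qed.

Let o (t : nat) : 'I_k.+1 := inZp t.

Lemma osucc t : sig (o t) = o t.+1.
Proof. by apply: val_inj => /=; rewrite -addn1 modnDml addn1. Qed.

Lemma o_neq t e : (0 < e < k.+1)%N -> o t != o (t + e).
Proof.
move=> /andP[e0 ek]; rewrite -(inj_eq val_inj) /=.
by rewrite -{1}(addn0 t) eqn_modDl mod0n modn_small // eq_sym -lt0n.
Qed.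

Lemma P1 t a : HM Hs (xmx (o t) (o t.+1) a).
Proof.
elim: t a => [|t IH] a.
  have -> : o 0 = 0 by apply: val_inj.
  exact: HMX.
rewrite -osucc -(osucc t.+1) -(osucc t); apply: HMshift; rewrite osucc; exact: IH.
Qed.

Lemma P2 d : (0 < d < k.+1)%N -> forall t a, HM Hs (xmx (o t) (o (t + d)) a).
Proof.
elim: d => [//|d IH] /andP[_ dk] t.
case: (posnP d) => [->|d0]; first by rewrite addn1; exact: P1.
apply: (@HMcomm _ (o (t + d))).
- by apply: o_neq; rewrite d0 /=; lia.
- by rewrite addnS -(addn1 (t + d)); apply: o_neq; rewrite /=; lia.
- by apply: o_neq; rewrite /=; lia.
- by apply: IH; rewrite d0 /=; lia.
- by rewrite addnS; exact: P1.
Qed.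

Lemma HMall (i j : 'I_k.+1) a : i != j -> HM Hs (xmx i j a).
Proof.
move=> ij.
have oi : o i = i by apply: val_inj; rewrite /= modn_small.
pose d := if (i < j)%N then (j - i)%N else (j + k.+1 - i)%N.
have hd : (0 < d < k.+1)%N.
  have ij' : (i : nat) <> j by move=> e; move/eqP: ij; apply; apply: val_inj.
  have := ltn_ord i; have := ltn_ord j; rewrite /d; case: ifP; lia.
have oj : o (i + d) = j.
  apply: val_inj => /=; rewrite /d; case: ifP => hij.
    by rewrite subnKC ?modn_small // ltnW.
  have -> : (i + (j + k.+1 - i) = j + k.+1)%N by have := ltn_ord i; lia.
  by rewrite modnDr modn_small.
by rewrite -{1}oi -oj; apply: P2.
Qed.

Lemma Hs_all : (<<[set g1; g2]>>)%g = [set: G].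
Proof.
apply/eqP; rewrite eqEsubset subsetT /=; apply/subsetP => g _.
have [g' hg' eg] := gen_all (fun i j a ij => HMall a ij) HMh (@GL_unitmx k.+1 F g).
by rewrite -(val_inj eg).
Qed.
End Main.
End Work.

Theorem mainTheorem1 (F : finFieldType) (n : nat) (hn : (2 <= n)%N)
  (hq : #|F| != 2%N) (xi : {unit F})
  (hxi : <[xi]>%g = [set: {unit F}]) :
  exists g1 g2 : {'GL_n[F]},
    GLval g1 = hmx ord0 (val xi) /\
    GLval g2 = xmx ord0 (inord 1) 1 *m wmx F n.-1 /\
    <<[set g1; g2]>>%g = [set: {'GL_n[F]}].
Proof.
case: n hn => [|[|k]] // _.
have hk : (0 < k.+1)%N by [].
exists (g1 k.+1 xi), (g2 F k.+1); split; last split.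
- by rewrite /g1 glK // hmx_unit // x0.
- rewrite /g2 glK ?g2_unit //; congr (xmx _ _ _ *m _); apply: val_inj => /=.
  by rewrite inordK.
- exact: Hs_all.
Qed.
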